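(* Let $G=(V=A\cup B,E,w)$ be a simple bipartite graph with weights $w\colon E\to\mathbb{R}_{\ge 0}$, let $b\colon V\to\mathbb{Z}_+$, and let $\varepsilon>0$. Let $F\subseteq E$ be a $b$-matching and let $p\colon B\to\mathbb{R}_{\ge 0}$ be prices such that (i) $F$ is $\varepsilon$-happy with respect to $p$, and (ii) every object $j\in B$ that is unsaturated by $F$ has $p(j)=0$. Then $w(F)\ge(1-\varepsilon)\,w(F^\ast)$, where $F^\ast$ is a $b$-matching of $G$ of maximum weight.
   Context: A $b$-matching is a set $F\subseteq E$ with $\deg_F(v)\le b(v)$ for all $v\in V$, where $\deg_F(v)$ is the number of edges of $F$ incident to $v$; $v$ is saturated by $F$ if $\deg_F(v)=b(v)$ and unsaturated if $\deg_F(v)<b(v)$. For $H\subseteq E$, $w(H)=\sum_{e\in H}w(e)$. Vertices of $A$ are called bidders and vertices of $B$ objects. $N(i)$ is the neighbor set of $i$ in $G$, and $F(i)$ is the set of objects matched to $i$ under $F$. Given prices $p\colon B\to\mathbb{R}_{\ge0}$, for a bidder $i\in A$ define $\pi(i)=\max\{\max_{k\in N(i)\setminus F(i)}\{(1-\varepsilon)w(i,k)-p(k)\},\,0\}$ (the inner max over an empty set is taken as $-\infty$). An edge $(i,j)\in F$ is $\varepsilon$-happy if $w(i,j)-p(j)\ge \pi(i)$. A bidder $i$ is $\varepsilon$-happy if all edges $(i,j)\in F$ are $\varepsilon$-happy and either $i$ is saturated by $F$ (and $\pi(i)\ge 0$), or $i$ is unsaturated by $F$ and $\pi(i)=0$.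 $F$ is $\varepsilon$-happy if every bidder $i\in A$ is $\varepsilon$-happy. *)

(* Defs.v *)
From mathcomp Require Import all_boot all_order all_algebra.
Set Implicit Arguments. Unset Strict Implicit. Unset Printing Implicit Defensive.
Import Order.TTheory GRing.Theory Num.Theory.
Local Open Scope ring_scope.

Section Defs.
Variables (R : realFieldType) (A B : finType).

Definition matchedA (F : {set A * B}) (i : A) : {set B} := [set j | (i, j) \in F].
Definition matchedB (F : {set A * B}) (j : B) : {set A} := [set i | (i, j) \in F].

Definition bmatching (E : {set A * B}) (bA : A -> nat) (bB : B -> nat)
  (F : {set A * B}) : Prop :=
  F \subset E /\ (forall i, #|matchedA F i| <= bA i)%N
              /\ (forall j, #|matchedB F j| <= bB j)%N.

Definition weight (w : A -> B -> R) (H : {set A * B}) : R :=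
  \sum_(e in H) w e.1 e.2.

Definition pi_val (E F : {set A * B}) (w : A -> B -> R) (p : B -> R) (eps : R)
  (i : A) : R :=
  \big[Num.max/0]_(k | ((i, k) \in E) && ((i, k) \notin F))
      ((1 - eps) * w i k - p k).

Definition happy_edge (E F : {set A * B}) (w : A -> B -> R) (p : B -> R) (eps : R)
  (i : A) (j : B) : Prop :=
  w i j - p j >= pi_val E F w p eps i.

Definition happy_bidder (E F : {set A * B}) (w : A -> B -> R) (bA : A -> nat)
  (p : B -> R) (eps : R) (i : A) : Prop :=
  (forall j, (i, j) \in F -> happy_edge E F w p eps i j) /\
  ((#|matchedA F i| = bA i /\ 0 <= pi_val E F w p eps i) \/
   ((#|matchedA F i| < bA i)%N /\ pi_val E F w p eps i = 0)).

Definition happy (E F : {set A * B}) (w : A -> B -> R) (bA : A -> nat)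
  (p : B -> R) (eps : R) : Prop := forall i : A, happy_bidder E F w bA p eps i.

End Defs.

(* Main.v *)
Require Import Defs.
From mathcomp Require Import all_boot all_order all_algebra.
From mathcomp Require Import lra.
Import Order.TTheory GRing.Theory Num.Theory.
Local Open Scope ring_scope.

Lemma sum_fst (R : realFieldType) (A B : finType) (S : {set A * B}) (g : A -> R) :
  \sum_(e in S) g e.1 = \sum_i g i *+ #|matchedA S i|.
Proof.
rewrite (eq_bigl (fun e => predT e.1 && ((e.1, e.2) \in S))); last by case.
rewrite -(pair_big_dep predT (fun i j => (i, j) \in S) (fun i _ => g i)) /=.
apply: eq_bigr => i _; rewrite -sumr_const; apply: eq_bigl => j; by rewrite inE.
Qed.

Lemma sum_snd (R : realFieldType) (A B : finType) (S : {set A * B}) (g : B -> R) :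
  \sum_(e in S) g e.2 = \sum_j g j *+ #|matchedB S j|.
Proof.
have swB : bijective (fun q : B * A => (q.2, q.1)).
  by exists (fun e : A * B => (e.2, e.1)); case.
rewrite (reindex _ (onW_bij _ swB)) /=.
rewrite (eq_bigl (fun q => predT q.1 && ((q.2, q.1) \in S))); last by case.
rewrite -(pair_big_dep predT (fun j i => (i, j) \in S) (fun j _ => g j)) /=.
apply: eq_bigr => j _; rewrite -sumr_const; apply: eq_bigl => i; by rewrite inE.
Qed.

Theorem lemma2 (R : realFieldType) (A B : finType) (E : {set A * B})
  (w : A -> B -> R) (bA : A -> nat) (bB : B -> nat) (eps : R)
  (F : {set A * B}) (p : B -> R) (Fstar : {set A * B}) :
  (forall e, e \in E -> 0 <= w e.1 e.2) ->
  (forall i, (0 < bA i)%N) -> (forall j, (0 < bB j)%N) ->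
  0 < eps ->
  bmatching E bA bB F ->
  (forall j, 0 <= p j) ->
  happy E F w bA p eps ->
  (forall j, (#|matchedB F j| < bB j)%N -> p j = 0) ->
  bmatching E bA bB Fstar ->
  (forall F', bmatching E bA bB F' -> weight w F' <= weight w Fstar) ->
  weight w F >= (1 - eps) * weight w Fstar.
Proof.
move=> w0 _ _ eps0 [FE [FA FB]] p0 hap punsat [SE [SA SB]] _.
set pi := pi_val E F w p eps.
have pi0 : forall i, 0 <= pi i.
  by move=> i; rewrite /pi; case: (hap i) => _ [[_ ->]|[_ ->]].
have mAD : forall (X Y : {set A * B}) (i : A), matchedA (X :\: Y) i = matchedA X i :\: matchedA Y i.
  by move=> X Y i; apply/setP => j; rewrite !inE.
have mBD : forall (X Y : {set A * B}) (j : B), matchedB (X :\: Y) j = matchedB X j :\: matchedB Y j.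
  by move=> X Y j; apply/setP => i; rewrite !inE.
have cntA : forall i, pi i *+ #|matchedA (Fstar :\: F) i|
                      <= pi i *+ #|matchedA (F :\: Fstar) i|.
  move=> i; case: (hap i) => _ [[sat _]|[_ Hz]]; last by rewrite /pi Hz !mul0rn.
  apply: (ler_wpMn2l (pi0 i)); rewrite !mAD !cardsD setIC sat.
  by apply: leq_sub2r; apply: SA.
have cntB : forall j, p j *+ #|matchedB (Fstar :\: F) j|
                      <= p j *+ #|matchedB (F :\: Fstar) j|.
  move=> j; case: (ltnP #|matchedB F j| (bB j)) => h.
    by rewrite punsat // !mul0rn.
  have sat : #|matchedB F j| = bB j by apply/eqP; rewrite eqn_leq FB h.
  apply: (ler_wpMn2l (p0 j)); rewrite !mBD !cardsD setIC sat.
  by apply: leq_sub2r; apply: SB.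
rewrite /weight (big_setID (A:=F) Fstar) (big_setID (A:=Fstar) F) /= mulrDr setIC.
apply: lerD.
  rewrite mulr_sumr; apply: ler_sum => e; rewrite inE => /andP [eF eS].
  have := w0 e (subsetP SE e eS) => we.
  by rewrite mulrBl mul1r lerBlDr lerDl mulr_ge0 // ltW.
apply: (@le_trans _ _ (\sum_(e in Fstar :\: F) (pi e.1 + p e.2))).
  rewrite mulr_sumr; apply: ler_sum => -[i k]; rewrite inE => /andP [nF eS] /=.
  have : (1 - eps) * w i k - p k <= pi i.
    rewrite /pi /pi_val.
    apply: le_bigmax_cond.
    by rewrite (subsetP SE _ eS).
  lra.
apply: (@le_trans _ _ (\sum_(e in F :\: Fstar) (pi e.1 + p e.2))).
  rewrite !big_split /= !sum_fst !sum_snd.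
  by apply: lerD; apply: ler_sum => x _.
apply: ler_sum => -[i j]; rewrite inE => /andP [_ eF] /=.
case: (hap i) => /(_ j eF); rewrite /happy_edge -/pi => h _.
lra.
Qed.
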